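(* Let $X,Y$ be Banach spaces and let $u$ be an extreme point of $B_{X\widehat{\otimes}_\pi Y}$. Suppose $u\in\mathrm{INA}_\pi(X\widehat{\otimes}_\pi Y)$ is witnessed by a Radon measure. Then $u$ is an elementary tensor, i.e. $u=x_0\otimes y_0$ for some $x_0\in X$, $y_0\in Y$.
   Context: A positive Borel measure on a Hausdorff space is Radon if it is finite and inner regular by compact sets and outer regular by open sets. Definition: $u\in X\widehat{\otimes}_\pi Y$ is an integral projective norm-attaining tensor, written $u\in\mathrm{INA}_\pi(X\widehat{\otimes}_\pi Y)$, if there is a finite positive Borel measure $\mu$ on $B_X\times B_Y$ (norm topology) such that $\varphi:B_X\times B_Y\to X\widehat{\otimes}_\pi Y$, $\varphi(x,y)=x\otimes y$, is $\mu$-Bochner integrable, $u=\int_{B_X\times B_Y}x\otimes y\,d\mu(x,y)$ (Bochner integral) and $\|\mu\|=\|u\|_\pi$; then $u$ is said to be witnessed by $\mu$. *)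

(* Defs.v *)
From HB Require Import structures.
From mathcomp Require Import all_boot all_order all_algebra.
From mathcomp Require Import all_classical all_reals all_analysis.
Set Implicit Arguments. Unset Strict Implicit. Unset Printing Implicit Defensive.
Import Order.TTheory GRing.Theory Num.Theory.
Import numFieldNormedType.Exports.
Local Open Scope classical_set_scope.
Local Open Scope ring_scope.

Section Defs.
Context {R : realType}.

Definition bilinear_map (X Y W : normedModType R) (B : X -> Y -> W) : Prop :=
  (forall (a : R) (x1 x2 : X) (y : Y), B (a *: x1 + x2) y = a *: B x1 y + B x2 y) /\
  (forall (a : R) (x : X) (y1 y2 : Y), B x (a *: y1 + y2) = a *: B x y1 + B x y2).

Definition linear_map (Z W : normedModType R) (T : Z -> W) : Prop :=
  forall (a : R) (z1 z2 : Z), T (a *: z1 + z2) = a *: T z1 + T z2.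

(* ---------- Projective tensor product, via its universal property ----------
   [is_proj_tensor t] : the Banach space Z together with the bilinear map
   t (x, y) |-> x (x) y is (isometrically) the completed projective tensor
   product X \hat\otimes_\pi Y.  *)
Definition is_proj_tensor (X Y Z : completeNormedModType R) (t : X -> Y -> Z) : Prop :=
  bilinear_map t /\
  (forall x y, `|t x y| <= `|x| * `|y|) /\
  forall (W : completeNormedModType R) (B : X -> Y -> W),
    bilinear_map B ->
    (exists c : R, forall x y, `|B x y| <= c * (`|x| * `|y|)) ->
    exists T : Z -> W,
      [/\ linear_map T, continuous T,
          (forall x y, T (t x y) = B x y),
          (forall c : R, 0 <= c -> (forall x y, `|B x y| <= c * (`|x| * `|y|)) ->
                         forall z, `|T z| <= c * `|z|) &
          (forall T' : Z -> W, linear_map T' -> continuous T' ->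
                (forall x y, T' (t x y) = B x y) -> T' = T)].

Definition extreme_point_unit_ball (Z : normedModType R) (u : Z) : Prop :=
  `|u| <= 1 /\
  forall (a b : Z) (s : R), 0 < s < 1 -> `|a| <= 1 -> `|b| <= 1 ->
    u = s *: a + (1 - s) *: b -> a = b.

Definition BXY (X Y : normedModType R) : set (X * Y)%type :=
  [set p | `|p.1| <= 1 /\ `|p.2| <= 1].
Arguments BXY : clear implicits.

Lemma BXY0 (X Y : normedModType R) : BXY X Y (0, 0).
Proof. by rewrite /BXY /= !normr0; split; exact: ler01. Qed.

End Defs.
Arguments BXY {R} X Y.

HB.instance Definition _ (R : realType) (X Y : normedModType R) :=
  isPointed.Build (set_type (BXY X Y)) (exist _ (0, 0) (mem_set (BXY0 X Y))).

(* the Borel measurable space on B_X x B_Y (norm = product topology,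
   restricted to the subset) *)
Notation BorelBXY X Y := (g_sigma_algebraType (@open (set_type (BXY X Y)))).

Section Defs2.
Context {R : realType}.
Local Open Scope ereal_scope.

Definition radon_measure (X Y : normedModType R)
    (mu : {measure set (BorelBXY X Y) -> \bar R}) : Prop :=
  [/\ mu setT < +oo,
      (forall A : set (BorelBXY X Y), measurable A ->
         mu A = ereal_sup [set mu K | K in
                  [set K : set (set_type (BXY X Y)) | compact K /\ K `<=` A]]) &
      (forall A : set (BorelBXY X Y), measurable A ->
         mu A = ereal_inf [set mu U | U in
                  [set U : set (set_type (BXY X Y)) | open U /\ A `<=` U]])].

Section Bochner.
Context d (T : measurableType d) (Z : normedModType R).

Definition simple_eval (s : seq (set T * Z)) (x : T) : Z :=
  (\sum_(p <- s) (\1_(p.1) x : R) *: p.2)%R.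

Definition simple_valid (mu : {measure set T -> \bar R}) (s : seq (set T * Z)) : Prop :=
  forall p, p \in s -> measurable p.1 /\ mu p.1 < +oo.

Definition simple_int (mu : {measure set T -> \bar R}) (s : seq (set T * Z)) : Z :=
  (\sum_(p <- s) fine (mu p.1) *: p.2)%R.

Definition bochner_integral (mu : {measure set T -> \bar R}) (f : T -> Z) (u : Z) : Prop :=
  exists s : nat -> seq (set T * Z),
    [/\ forall n, simple_valid mu (s n),
        forall n, measurable_fun setT (fun x => `|f x - simple_eval (s n) x|%R),
        (fun n => \int[mu]_x (`|f x - simple_eval (s n) x|%R)%:E) @ \oo --> 0 &
        (fun n => simple_int mu (s n)) @ \oo --> u].
End Bochner.

Definition INA_witness (X Y Z : completeNormedModType R) (t : X -> Y -> Z)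
    (mu : {measure set (BorelBXY X Y) -> \bar R}) (u : Z) : Prop :=
  [/\ mu setT < +oo,
      bochner_integral mu (fun p : BorelBXY X Y => t (sval p).1 (sval p).2) u &
      mu setT = (`|u|%R)%:E].

End Defs2.

(* Main.v *)
Set Warnings "-notation-overridden,-ambiguous-paths,-notation-incompatible-prefix".
Require Import Defs.
From HB Require Import structures.
From mathcomp Require Import all_boot all_order all_algebra.
From mathcomp Require Import all_classical all_reals all_analysis.
From mathcomp Require Import measurable_realfun.
From mathcomp Require Import ring lra.
Import Order.TTheory GRing.Theory Num.Theory.
Import numFieldNormedType.Exports.
Local Open Scope classical_set_scope.
Local Open Scope ring_scope.
Lemma inj_hausdorff (S T' : topologicalType) (g : S -> T') :
  continuous g -> injective g -> hausdorff_space T' -> hausdorff_space S.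
Proof.
rewrite !open_hausdorff => cg ig hT x y xy.
have gxy : g x != g y by apply: contra xy => /eqP /ig ->.
have [[A B] /= [Ax By] [oA oB /eqP AB0]] := hT _ _ gxy.
exists (g @^-1` A, g @^-1` B) => /=.
  by split; rewrite inE /=; [move: Ax | move: By]; rewrite inE.
split; [exact: (proj1 (continuousP _) cg) | exact: (proj1 (continuousP _) cg)|].
apply/eqP; rewrite -subset0 => z [Az Bz].
have : (A `&` B) (g z) by [].
by rewrite AB0.
Qed.

Section Topo.
Context {R : realType} (X Y : normedModType R).
Local Notation S := (set_type (BXY X Y)).

Lemma S_hausdorff : hausdorff_space S.
Proof.
apply: (@inj_hausdorff S (X * Y)%type (fun q : S => sval q)).
- rewrite -set_valE; exact: initial_continuous.
- exact: val_inj.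
- exact: norm_hausdorff.
Qed.

Lemma S_open_meas (U : set S) : open U -> measurable (U : set (BorelBXY X Y)).
Proof. by move=> oU; apply: sub_sigma_algebra. Qed.

Lemma S_compact_meas (K : set S) : compact K -> measurable (K : set (BorelBXY X Y)).
Proof.
move=> cK; have cl : closed K := compact_closed S_hausdorff cK.
rewrite -[K]setCK; apply: measurableC; apply: S_open_meas.
exact: closed_openC.
Qed.

Lemma S_ball_open (p : S) (d : R) : open [set q : S | `|sval p - sval q| < d].
Proof.
have -> : [set q : S | `|sval p - sval q| < d] = (@sval _ _) @^-1` (ball (sval p) d).
  by apply/seteqP; split => q /=; rewrite -ball_normE.
apply: (proj1 (continuousP _)); last exact: ball_open.
rewrite -set_valE; exact: initial_continuous.
Qed.
End Topo.

Section Meas.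
Context {R : realType} (X Y : normedModType R) (Z : completeNormedModType R)
  (mu : {measure set (BorelBXY X Y) -> \bar R}).
Local Notation T := (BorelBXY X Y).
Hypothesis mufin : (mu setT < +oo)%E.

Lemma mu_fin (A : set T) : measurable A -> mu A \is a fin_num.
Proof.
move=> mA; rewrite ge0_fin_numE ?measure_ge0//; apply: le_lt_trans mufin.
by apply: le_measure; rewrite ?inE.
Qed.

Definition sint (E : set T) (s : seq (set T * Z)) : Z :=
  \sum_(p <- s) fine (mu (p.1 `&` E)) *: p.2.
Definition smeas (s : seq (set T * Z)) := forall p, p \in s -> measurable p.1.

Lemma smeas_cons {A z s} : smeas ((A, z) :: s) -> measurable A /\ smeas s.
Proof.
move=> H; split; first exact: (H (A, z) (mem_head _ _)).
by move=> p ps; apply: H; rewrite in_cons ps orbT.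
Qed.

Lemma ML {s} : smeas s -> forall w : Z,
  measurable_fun setT (fun x : T => `|w + simple_eval s x|).
Proof.
elim: s => [|[A z] s IH] Hs w.
  have -> : (fun x : T => `|w + simple_eval [::] x|) = cst `|w|.
    by apply/funext => x; rewrite /simple_eval big_nil addr0.
  exact: measurable_cst.
have [mA Hs'] := smeas_cons Hs.
have -> : (fun x => `|w + simple_eval ((A, z) :: s) x|) =
   (fun x => \1_A x * `|(w + z) + simple_eval s x| + (1 - \1_A x) * `|w + simple_eval s x|).
  apply/funext => x; rewrite /simple_eval big_cons /= indicE.
  case: (x \in A) => /=.
    by rewrite scale1r mul1r subrr mul0r addr0 addrA.
  by rewrite scale0r add0r mul0r subr0 mul1r add0r.
apply: measurable_funD; apply: measurable_funM.
- exact: measurable_indic.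
- exact: IH.
- apply: measurable_funB; [exact: measurable_cst | exact: measurable_indic].
- exact: IH.
Qed.

Lemma sint_split {s E A} : smeas s -> measurable E -> measurable A ->
  sint E s = sint (E `&` A) s + sint (E `\` A) s.
Proof.
move=> Hs mE mA; rewrite /sint -big_split /=; apply: eq_big_seq => -[B z] Bs /=.
have mB : measurable B := Hs _ Bs.
rewrite -scalerDl; congr (_ *: _).
have m1 : measurable (B `&` (E `&` A)) by apply: measurableI => //; apply: measurableI.
have m2 : measurable (B `&` (E `\` A)) by apply: measurableI => //; apply: measurableD.
rewrite -fineD ?mu_fin //.
congr fine; rewrite (measureDI mu (measurableI _ _ mB mE) mA) addeC.
by rewrite setIA setIDA.
Qed.

Lemma CL {s} : smeas s -> forall (E : set T) (w : Z), measurable E ->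
  ((`|fine (mu E) *: w + sint E s|)%:E <=
     \int[mu]_(x in E) (`|w + simple_eval s x|)%:E)%E.
Proof.
elim: s => [|[A z] s IH] Hs E w mE.
  rewrite /sint big_nil addr0.
  under eq_integral do rewrite /simple_eval big_nil addr0.
  have := integral_cst mu mE (`|w|)%:E; rewrite /cst => ->.
  rewrite normrZ ger0_norm ?fine_ge0 ?measure_ge0 // EFinM fineK ?mu_fin //.
  by rewrite muleC.
have [mA Hs'] := smeas_cons Hs.
set E1 := E `&` A; set E2 := E `\` A.
have mE1 : measurable E1 by apply: measurableI.
have mE2 : measurable E2 by apply: measurableD.
have fE : fine (mu E) = fine (mu E1) + fine (mu E2).
  by rewrite -fineD ?mu_fin // (measureDI mu mE mA) addeC.
have sE := sint_split Hs' mE mA.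
have -> : fine (mu E) *: w + sint E ((A, z) :: s) =
   (fine (mu E1) *: (w + z) + sint E1 s) + (fine (mu E2) *: w + sint E2 s).
  rewrite /sint big_cons /= -/(sint E s) sE fE setIC -/E1 -/E2 -/(sint E1 s) -/(sint E2 s) scalerDl scalerDr.
  rewrite -!addrA; congr (_ + _); rewrite addrC -!addrA; congr (_ + _); congr (_ + _); exact: addrC.
have hE : E = E1 `|` E2 by rewrite /E1 /E2 setDE -setIUr setUCr setIT.
rewrite [in X in (_ <= X)%E]hE integral_setU //; first last.
- by apply/disj_setPS => x [[_ Ax] [_ nAx]].
- apply: measurable_funS (_ : measurable setT) _ _ => //.
  by apply/measurable_EFinP; apply: ML.
apply: (@le_trans _ _ ((`|fine (mu E1) *: (w + z) + sint E1 s|)%:E +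
                          (`|fine (mu E2) *: w + sint E2 s|)%:E)%E).
  by rewrite -EFinD lee_fin ler_normD.
apply: leeD.
  apply: le_trans (IH Hs' E1 (w + z) mE1) _; rewrite le_eqVlt; apply/orP; left; apply/eqP; apply: eq_integral => x.
  rewrite inE => -[_ Ax]; rewrite /simple_eval big_cons /= indicE.
  by rewrite (mem_set Ax) scale1r addrA.
apply: le_trans (IH Hs' E2 w mE2) _; rewrite le_eqVlt; apply/orP; left; apply/eqP; apply: eq_integral => x.
rewrite inE => -[_ Ax]; rewrite /simple_eval big_cons /= indicE.
by rewrite memNset // scale0r add0r.
Qed.


Lemma int_le (E : set T) (g h1 h2 : T -> R) : measurable E ->
  measurable_fun setT g -> measurable_fun setT h1 -> measurable_fun setT h2 ->
  (forall x, 0 <= g x) -> (forall x, 0 <= h1 x) -> (forall x, 0 <= h2 x) ->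
  (forall x, E x -> g x <= h1 x + h2 x) ->
  (\int[mu]_(x in E) (g x)%:E <=
     \int[mu]_(x in E) (h1 x)%:E + \int[mu]_(x in E) (h2 x)%:E)%E.
Proof.
move=> mE mg mh1 mh2 g0 h10 h20 gh.
have mS : forall k : T -> R, measurable_fun setT k -> measurable_fun E (EFin \o k).
  by move=> k mk; apply/measurable_EFinP; apply: (measurable_funS measurableT).
rewrite -ge0_integralD //; try (by move=> x _; rewrite lee_fin); try exact: mS.
apply: ge0_le_integral => //; try (by move=> x _; rewrite lee_fin); try exact: mS.
  try exact: emeasurable_funD (mS _ mh1) (mS _ mh2).
Qed.

Lemma sub_int (E : set T) (g : T -> R) : measurable E ->
  measurable_fun setT g -> (forall x, 0 <= g x) ->
  (\int[mu]_(x in E) (g x)%:E <= \int[mu]_x (g x)%:E)%E.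
Proof.
move=> mE mg g0; apply: ge0_subset_integral => //.
- by apply/measurable_EFinP.
- by move=> x _; rewrite lee_fin.
Qed.

Variables (f : T -> Z) (s : nat -> seq (set T * Z)).
Hypothesis Hs : forall n, smeas (s n).
Hypothesis Hm : forall n, measurable_fun setT (fun x => `|f x - simple_eval (s n) x|).
Let D n := (\int[mu]_x (`|f x - simple_eval (s n) x|)%:E)%E.
Hypothesis HD : D n @[n --> \oo] --> 0%E.

Lemma A1 (E : set T) z c n : measurable E -> 0 <= c ->
  (forall x, E x -> `|f x - z| <= c) ->
  (`|sint E (s n) - fine (mu E) *: z|%:E <= (c * fine (mu E))%:E + D n)%E.
Proof.
move=> mE c0 Hc.
have := CL (Hs n) E (-z) mE; rewrite scalerN addrC => H; apply: le_trans H _.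
apply: le_trans (@int_le E (fun x => `|- z + simple_eval (s n) x|) (fun x => `|f x - simple_eval (s n) x|) (cst c) mE
   (ML (Hs n) (-z)) (Hm n) (measurable_cst _) _ _ _ _) _ => //.
- move=> x Ex /=.
  have -> : - z + simple_eval (s n) x = (f x - z) + (simple_eval (s n) x - f x).
    by rewrite [RHS]addrC addrA subrK addrC.
  apply: le_trans (ler_normD _ _) _.
  by rewrite addrC distrC lerD2l Hc.
rewrite addeC; apply: leeD.
  have := integral_cst mu mE c%:E; rewrite /cst => ->.
  by rewrite EFinM fineK ?mu_fin.
exact: sub_int.
Qed.

Lemma Cauchy_est (E : set T) n m : measurable E ->
  (`|sint E (s n) - sint E (s m)|%:E <= D n + D m)%E.
Proof.
move=> mE.
pose l := s n ++ [seq (p.1, - p.2) | p <- s m].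
have Hl : smeas l.
  move=> p; rewrite mem_cat => /orP[ps|/mapP[q qs ->]]; first exact: Hs ps.
  exact: Hs qs.
have sl : sint E l = sint E (s n) - sint E (s m).
  rewrite /sint big_cat big_map /=; congr (_ + _); rewrite -sumrN.
  by apply: eq_bigr => p _; rewrite scalerN.
have el : forall x, simple_eval l x = simple_eval (s n) x - simple_eval (s m) x.
  move=> x; rewrite /simple_eval big_cat big_map /=; congr (_ + _); rewrite -sumrN.
  by apply: eq_bigr => p _; rewrite scalerN.
have := CL Hl E 0 mE; rewrite scaler0 add0r sl => H; apply: le_trans H _.
apply: le_trans (@int_le E (fun x => `|0 + simple_eval l x|) (fun x => `|f x - simple_eval (s n) x|)
   (fun x => `|f x - simple_eval (s m) x|) mE
   (ML Hl 0) (Hm n) (Hm m) _ _ _ _) _ => //.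
- move=> x Ex /=; rewrite el add0r.
  have -> : simple_eval (s n) x - simple_eval (s m) x =
     (simple_eval (s n) x - f x) + (f x - simple_eval (s m) x).
    by rewrite addrA subrK.
  by apply: le_trans (ler_normD _ _) _; rewrite distrC.
by apply: leeD; apply: sub_int.
Qed.

Lemma Dsmall {e} : 0 < e -> \forall n \near \oo, (D n < e%:E)%E.
Proof.
move=> e0; have [Dfin Dcv] := proj1 (fine_cvgP _ _) HD.
have Hc := proj1 (cvgrPdist_lt _ _) Dcv e e0.
near=> n.
have Dn : D n \is a fin_num by near: n; exact: Dfin.
have H : `|0 - fine (D n)| < e by near: n; exact: Hc.
rewrite -(fineK Dn) lte_fin.
by apply: le_lt_trans H; rewrite sub0r normrN ler_norm.
Unshelve. all: by end_near.
Qed.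

Lemma a_cvg (E : set T) : measurable E -> cvg (sint E (s n) @[n --> \oo]).
Proof.
move=> mE; apply: cauchy_cvg; apply: cauchy_exP => e e0.
have e2 : 0 < e / 2 by rewrite divr_gt0.
have [N _ HN] := Dsmall e2.
exists (sint E (s N)); exists N => // n /= Nn.
rewrite -ball_normE /= -lte_fin; apply: le_lt_trans (Cauchy_est E N n mE) _.
rewrite [e]splitr EFinD; apply: lteD; apply: HN => //=.
Qed.


Definition v (E : set T) : Z := lim (sint E (s n) @[n --> \oo]).

Lemma v_cvg {E : set T} : measurable E -> sint E (s n) @[n --> \oo] --> v E.
Proof. by move=> mE; apply: (a_cvg E mE). Qed.

Lemma lim_bound {a : nat -> Z} {vv w : Z} {r : R} : a n @[n --> \oo] --> vv ->
  (forall n, (`|a n - w|%:E <= r%:E + D n)%E) -> `|vv - w| <= r.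
Proof.
move=> av H; apply/ler_addgt0Pr => e e0.
have e2 : 0 < e / 2 by rewrite divr_gt0.
have [N1 _ H1] := proj1 (cvgrPdist_lt _ _) av _ e2.
have [N2 _ H2] := Dsmall e2.
pose n := maxn N1 N2.
have h1 : `|vv - a n| < e / 2 by apply: H1; rewrite /= leq_maxl.
have h2 : (D n < (e / 2)%:E)%E by apply: H2; rewrite /= leq_maxr.
have h3 : `|a n - w| < r + e / 2.
  rewrite -lte_fin EFinD; apply: le_lt_trans (H n) _.
  by rewrite lteD2lE.
apply: le_trans (ler_distD (a n) vv w) _.
apply: ltW; apply: lt_le_trans (ltrD h1 h3) _.
have -> : e / 2 + (r + e / 2) = r + (e / 2 + e / 2) by rewrite addrCA.
by rewrite -splitr.
Qed.

Lemma v_bound (E : set T) z c : measurable E -> 0 <= c ->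
  (forall x, E x -> `|f x - z| <= c) ->
  `|v E - fine (mu E) *: z| <= c * fine (mu E).
Proof. by move=> mE c0 Hc; apply: (lim_bound (v_cvg mE)) => n; exact: A1. Qed.

Lemma v_add (E : set T) (u : Z) : measurable E ->
  simple_int mu (s n) @[n --> \oo] --> u -> v E + v (~` E) = u.
Proof.
move=> mE Hu.
have mEc : measurable (~` E) by apply: measurableC.
have eq : (fun n => sint E (s n)) + (fun n => sint (~` E) (s n)) =
          (fun n => simple_int mu (s n)).
  apply/funext => n; rewrite /GRing.add /=.
  have := @sint_split (s n) setT E (Hs n) measurableT mE.
  rewrite setTI setTD => <-.
  by rewrite /sint /simple_int; apply: eq_bigr => p _; rewrite setIT.
have H : (fun n => simple_int mu (s n)) @ \oo --> v E + v (~` E).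
  by rewrite -eq; apply: cvgD; apply: v_cvg.
have L1 := cvg_lim (@norm_hausdorff _ Z) H.
have L2 := cvg_lim (@norm_hausdorff _ Z) Hu.
by rewrite -L1 -L2.
Qed.

End Meas.
Arguments smeas {R X Y Z} s.

Lemma bil_sub {R : realType} (X Y Z : normedModType R) (t : X -> Y -> Z) :
  bilinear_map t -> forall xq yq xp yp,
  t xq yq - t xp yp = t (xq - xp) yq + t xp (yq - yp).
Proof.
move=> [b1 b2] xq yq xp yp.
have h1 : t (xq - xp) yq = t xq yq - t xp yq.
  by have := b1 (-1) xp xq yq; rewrite !scaleN1r addrC => ->; rewrite addrC.
have h2 : t xp (yq - yp) = t xp yq - t xp yp.
  by have := b2 (-1) xp yp yq; rewrite !scaleN1r addrC => ->; rewrite addrC.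
by rewrite h1 h2 addrA subrK.
Qed.

Theorem proposition2p15 (R : realType) (X Y Z : completeNormedModType R)
    (t : X -> Y -> Z) (u : Z)
    (mu : {measure set (BorelBXY X Y) -> \bar R}) :
  is_proj_tensor t ->
  extreme_point_unit_ball u ->
  radon_measure mu ->
  INA_witness t mu u ->
  exists (x0 : X) (y0 : Y), u = t x0 y0.
Proof.
move=> [tbil [tnorm _]] [u1 uext] [_ mu_inner _] [mufin [s [Hs Hm HD Hu]] muu].
pose f := fun p : BorelBXY X Y => t (sval p).1 (sval p).2.
have Hs' : forall n, smeas (s n) by move=> n p ps; exact: (Hs n p ps).1.
have fB : forall p : BorelBXY X Y, `|f p| <= 1.
  move=> p; apply: le_trans (tnorm _ _) _.
  have /set_mem [h1 h2] := proj2_sig p.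
  by rewrite -[1]mulr1; apply: ler_pM.
have [->|u0] := eqVneq u 0.
  exists 0, 0; apply/eqP; rewrite eq_sym -normr_le0.
  by apply: le_trans (tnorm _ _) _; rewrite !normr0 mul0r.
have nu1 : `|u| = 1.
  set r := `|u|.
  have r0 : 0 < r by rewrite normr_gt0.
  have r1 : r <= 1 by [].
  have := uext (r^-1 *: u) ((2 - r^-1) *: u) (1/2).
  have h : 0 < (1/2 : R) < 1 by apply/andP; split; lra.
  have na : `|r^-1 *: u| <= 1.
    rewrite normrZ ger0_norm; last by rewrite invr_ge0 ltW.
    by rewrite -/r mulVf ?gt_eqF.
  have nb : `|(2 - r^-1) *: u| <= 1.
    have e1 : (2 - r^-1) * r = 2 * r - 1 by rewrite mulrBl mulVf ?gt_eqF.
    rewrite normrZ -/r -{2}(ger0_norm (ltW r0)) -normrM e1.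
    by rewrite ler_norml; apply/andP; split; lra.
  have eu : u = 1 / 2 *: (r^-1 *: u) + (1 - 1 / 2) *: ((2 - r^-1) *: u).
    rewrite !scalerA -scalerDl.
    have -> : 1 / 2 * r^-1 + (1 - 1 / 2) * (2 - r^-1) = 1 :> R by lra.
    by rewrite scale1r.
  move=> /(_ h na nb eu) /eqP; rewrite -subr_eq0 -scalerBl scaler_eq0 (negPf u0) orbF.
  move=> /eqP H.
  have : r^-1 = 1 by lra.
  by move/eqP; rewrite invr_eq1 => /eqP.
have muT : mu setT = 1%:E by rewrite muu nu1.
pose S := set_type (BXY X Y).
have [p Hp] : exists p : S, forall U : set S, open U -> U p ->
    (0 < mu (U : set (BorelBXY X Y)))%E.
  apply: contrapT => H.
  have H' : forall p : S, exists U : set S,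
      open U /\ U p /\ mu (U : set (BorelBXY X Y)) = 0%E.
    move=> p; case: (pselect (exists U : set S,
      open U /\ U p /\ mu (U : set (BorelBXY X Y)) = 0%E)) => // HnU.
    exfalso; apply: H; exists p => U oU Up.
    rewrite lt_neqAle measure_ge0 andbT; apply/eqP => mu0.
    by apply: HnU; exists U; split => //; split.
  have [g Hg] := boolp.choice H'.
  have muK : forall K : set S, compact K -> mu (K : set (BorelBXY X Y)) = 0%E.
    move=> K cK.
    have cov : cover_compact K by rewrite -compact_cover.
    have [D' _ KD'] := cov _ setT g (fun i _ => (Hg i).1)
      (fun q Kq => ex_intro2 _ _ q I (Hg q).2.1).
    have mg : forall i, measurable (g i : set (BorelBXY X Y)).
      by move=> i; apply: S_open_meas; exact: (Hg i).1.
    move: KD'; rewrite /cover bigcup_fset => KD'.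
    have mc : measurable (\big[setU/set0]_(i <- finmap.enum_fset D') g i
        : set (BorelBXY X Y)) by apply: bigsetU_measurable.
    apply/eqP; rewrite eq_le measure_ge0 andbT.
    apply: le_trans (le_measure mu _ _ KD') _; rewrite ?inE //.
      exact: S_compact_meas.
    elim: (finmap.enum_fset D') => [|i l IH]; first by rewrite big_nil measure0.
    rewrite big_cons setUC.
    have mb : measurable (\big[setU/set0]_(j <- l) g j : set (BorelBXY X Y)).
      by apply: bigsetU_measurable.
    have := @measureU0 _ _ _ mu _ _ mb (mg i) (Hg i).2.2.
    by move=> /= ->.
  have : (mu setT <= 0)%E.
    rewrite (mu_inner setT measurableT); apply: ge_ereal_sup.
    by move=> _ [K [cK _] <-]; rewrite muK.
  by rewrite muT lee_fin ler10.
exists (sval p).1, (sval p).2.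
apply/eqP; rewrite -subr_eq0 -normr_eq0 eq_le normr_ge0 andbT.
apply/ler_addgt0Pr => e e0; rewrite add0r.
have e2 : 0 < e / 2 by rewrite divr_gt0.
pose U : set S := [set q : S | `|sval p - sval q| < e / 2].
have oU : open U := S_ball_open X Y p (e / 2).
have Up : U p by rewrite /U /= subrr normr0.
have mU : measurable (U : set (BorelBXY X Y)) := S_open_meas X Y U oU.
have muU := Hp U oU Up.
have fU : forall q : BorelBXY X Y, U q -> `|f q - f p| <= e.
  move=> q Uq; rewrite /f (bil_sub _ _ _ _ tbil).
  have /set_mem [hq1 hq2] := proj2_sig q.
  have /set_mem [hp1 hp2] := proj2_sig p.
  move: Uq; rewrite /U /= prod_normE => Uq.
  have d1 : `|(sval q).1 - (sval p).1| < e / 2.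
    rewrite distrC; apply: le_lt_trans Uq; by rewrite le_max lexx.
  have d2 : `|(sval q).2 - (sval p).2| < e / 2.
    rewrite distrC; apply: le_lt_trans Uq; by rewrite le_max lexx orbT.
  apply: le_trans (ler_normD _ _) _.
  apply: le_trans (lerD (tnorm _ _) (tnorm _ _)) _.
  have n1 := normr_ge0 ((sval q).1 - (sval p).1).
  have n2 := normr_ge0 ((sval q).2 - (sval p).2).
  have n3 := normr_ge0 (sval q).2.
  have n4 := normr_ge0 (sval p).1.
  nra.
set m := fine (mu (U : set (BorelBXY X Y))).
have mfin := mu_fin X Y mu mufin _ mU.
have m0 : 0 < m by rewrite -lte_fin fineK.
have mUc : measurable (~` U : set (BorelBXY X Y)) by apply: measurableC.
have mcfin := mu_fin X Y mu mufin _ mUc.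
set mc := fine (mu (~` U : set (BorelBXY X Y))).
have mc0 : 0 <= mc by rewrite fine_ge0 ?measure_ge0.
have mcm : mc = 1 - m.
  have H0 := measureDI mu (measurableT) mU.
  rewrite setTD setTI in H0.
  have : (mu (~` U : set (BorelBXY X Y)) + mu (U : set (BorelBXY X Y)) = 1%:E)%E.
    by rewrite -H0; exact: muT.
  rewrite -(fineK mcfin) -(fineK mfin) -EFinD => /eqP.
  rewrite eqe => /eqP H; rewrite -/m -/mc in H; lra.
have m1 : m <= 1 by lra.
have VB := v_bound X Y Z mu mufin f s Hs' Hm HD.
have VA := v_add X Y Z mu mufin f s Hs' Hm HD U u mU Hu.
set V1 := v X Y Z mu s U in VA VB *.
set V2 := v X Y Z mu s (~` U) in VA VB *.
have b1 : `|V1| <= m.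
  have := VB U 0 1 mU ler01 (fun x _ => eq_ind _ (fun w => w <= 1) (fB x) _ (congr1 _ (esym (subr0 (f x))))).
  by rewrite scaler0 subr0 mul1r.
have b2 : `|V2| <= 1 - m.
  have := VB (~` U) 0 1 mUc ler01 (fun x _ => eq_ind _ (fun w => w <= 1) (fB x) _ (congr1 _ (esym (subr0 (f x))))).
  by rewrite scaler0 subr0 mul1r -/mc mcm.
have b3 : `|V1 - m *: f p| <= e * m.
  exact: VB U (f p) e mU (ltW e0) fU.
have V1u : V1 = m *: u.
  have [m_lt1|m_ge1] := ltP m 1.
    pose a := m^-1 *: V1.
    pose b := (1 - m)^-1 *: V2.
    have h : 0 < m < 1 by apply/andP.
    have m1' : 0 < 1 - m by lra.
    have na : `|a| <= 1.
      rewrite normrZ ger0_norm ?invr_ge0 ?(ltW m0) //.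
      by rewrite ler_pdivrMl // mulr1.
    have nb : `|b| <= 1.
      rewrite normrZ ger0_norm ?invr_ge0 ?(ltW m1') //.
      by rewrite ler_pdivrMl // mulr1.
    have ma : m *: a = V1 by rewrite /a scalerA mulfV ?gt_eqF // scale1r.
    have mb : (1 - m) *: b = V2 by rewrite /b scalerA mulfV ?gt_eqF // scale1r.
    have eu : u = m *: a + (1 - m) *: b by rewrite ma mb.
    have ab := uext a b m h na nb eu.
    have ua : u = a by rewrite eu -ab -scalerDl addrC subrK scale1r.
    by rewrite -ma -ua.
  have mE1 : m = 1 by apply/eqP; rewrite eq_le m1.
  have : `|V2| <= 0 by apply: le_trans b2 _; lra.
  rewrite normr_le0 => /eqP V20.
  by rewrite mE1 scale1r -VA V20 addr0.
move: b3; rewrite V1u -scalerBr normrZ ger0_norm ?(ltW m0) // mulrC.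
by rewrite ler_pM2r.
Qed.
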